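(* Let $G$ be a bridgeless cubic graph and let $\{e_1,e_2\}$ be a $2$-edge-cut of $G$, $e_1=u_1v_1$, $e_2=u_2v_2$, where $u_1,u_2$ lie in one component $H_1$ of $G-\{e_1,e_2\}$ and $v_1,v_2$ in the other component $H_2$. Let $G_1=H_1+e_1'$ and $G_2=H_2+e_2'$, where $e_1'=u_1u_2$ and $e_2'=v_1v_2$ are new edges (the graphs obtained by the $\{e_1,e_2\}$-reduction). Let $M_1$ and $M_2$ be well-spread perfect matchings of $G_1$ and $G_2$ respectively that agree on $e_1'$ and $e_2'$, i.e. $e_1'\in M_1$ if and only if $e_2'\in M_2$. Then $G$ has a well-spread perfect matching $M$; namely, $M=M_1\cup M_2$ if $e_1'\notin M_1$, and $M=(M_1\setminus\{e_1'\})\cup(M_2\setminus\{e_2'\})\cup\{e_1,e_2\}$ if $e_1'\in M_1$.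
   Context: Graphs may have parallel edges but no loops. Cubic: every vertex has degree $3$; bridgeless: no edge whose removal increases the number of connected components. A $k$-edge-cut is an inclusion-minimal edge cut of size $k$. A well-spread perfect matching of a bridgeless cubic graph is a perfect matching containing exactly one edge of each $3$-edge-cut of the graph. *)

(* Defs.v *)
(* Finite multigraphs (parallel edges allowed) given by a
   finite vertex type, a finite edge type and an endpoint map. *)
From mathcomp Require Import all_boot.
Set Implicit Arguments. Unset Strict Implicit. Unset Printing Implicit Defensive.

Record mgraph := MGraph {
  vert : finType;
  edge : finType;
  endp : edge -> vert * vert }.

Section Defs.
Variable g : mgraph.

Definition joins (e : edge g) (x y : vert g) : bool :=
  (endp e == (x, y)) || (endp e == (y, x)).

Definition incident (e : edge g) (v : vert g) : bool :=
  ((endp e).1 == v) || ((endp e).2 == v).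

Definition loopless : Prop := forall e : edge g, (endp e).1 != (endp e).2.

Definition deg (v : vert g) : nat := #|[set e | incident e v]|.

Definition cubic : Prop := forall v : vert g, deg v = 3.

Definition adjF (F : {set edge g}) : rel (vert g) :=
  fun x y => [exists e, (e \notin F) && joins e x y].

Definition ncomp (F : {set edge g}) : nat := n_comp (adjF F) predT.

Definition gcomp (F : {set edge g}) (x : vert g) : {set vert g} :=
  [set y | connect (adjF F) x y].

Lemma gcomp_self F x : x \in gcomp F x.
Proof. by rewrite inE connect0. Qed.

Definition bridgeless : Prop :=
  forall e : edge g, ~ (ncomp set0 < ncomp [set e]).

Definition edge_cut (F : {set edge g}) : Prop := ncomp set0 < ncomp F.

Definition k_edge_cut (k : nat) (F : {set edge g}) : Prop :=
  [/\ edge_cut F, forall F' : {set edge g}, F' \proper F -> ~ edge_cut F' & #|F| = k].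

Definition perfect_matching (M : {set edge g}) : Prop :=
  forall v : vert g, #|[set e in M | incident e v]| = 1.

Definition well_spread (M : {set edge g}) : Prop :=
  perfect_matching M /\ (forall C, k_edge_cut 3 C -> #|M :&: C| = 1).

(* The reduced graph: the subgraph induced on S plus a new edge ab (= None). *)
Section Reduce.
Variables (S : {set vert g}) (a b : vert g) (Ha : a \in S) (Hb : b \in S).

Definition rvert : finType := {x : vert g | x \in S}.
Definition redge_in (e : edge g) : bool := ((endp e).1 \in S) && ((endp e).2 \in S).
Definition redge : finType := option {e : edge g | redge_in e}.

Definition rendp (oe : redge) : rvert * rvert :=
  match oe with
  | Some e => (exist (fun x => x \in S) (endp (val e)).1 (proj1 (elimT andP (valP e))),
               exist (fun x => x \in S) (endp (val e)).2 (proj2 (elimT andP (valP e))))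
  | None => (exist (fun x => x \in S) a Ha, exist (fun x => x \in S) b Hb)
  end.

Definition reduce : mgraph := @MGraph rvert redge rendp.

Definition lift_old (N : {set edge reduce}) : {set edge g} :=
  [set e | [exists x : {e : edge g | redge_in e}, (val x == e) && (Some x \in N)]].
End Reduce.
End Defs.

(* Main.v *)
Require Import Defs.
From mathcomp Require Import all_boot zify.
Set Implicit Arguments. Unset Strict Implicit. Unset Printing Implicit Defensive.

Section Generic.
Variable g : mgraph.
Implicit Types (F : {set edge g}) (X Y Z : {set vert g}) (e : edge g) (x y : vert g).

Definition cross X e : bool := ((endp e).1 \in X) != ((endp e).2 \in X).
Definition dl X : {set edge g} := [set e | cross X e].

Lemma in_dl X e : (e \in dl X) = cross X e.
Proof. by rewrite inE. Qed.

Lemma joinsC e x y : joins e x y = joins e y x.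
Proof. by rewrite /joins orbC. Qed.

Lemma joins_cross X e x y : joins e x y -> cross X e = ((x \in X) != (y \in X)).
Proof.
rewrite /joins /cross; case: (endp e) => a b /orP [] /eqP [-> ->] //.
by rewrite eq_sym.
Qed.

Lemma joins_inc e x y v : joins e x y -> incident e v = (x == v) || (y == v).
Proof.
rewrite /joins /incident; case: (endp e) => a b /orP [] /eqP [-> ->] //.
by rewrite orbC.
Qed.

Lemma joins_self e : joins e (endp e).1 (endp e).2.
Proof. by rewrite /joins -surjective_pairing eqxx. Qed.

Lemma adjF_sym F : symmetric (adjF F).
Proof. by move=> x y; apply: eq_existsb => e; rewrite joinsC. Qed.

Lemma adjF_csym F : connect_sym (adjF F).
Proof. exact: sym_connect_sym (adjF_sym F). Qed.

Lemma connect_mono F F' x y : F \subset F' ->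
  connect (adjF F') x y -> connect (adjF F) x y.
Proof.
move=> sub; apply: connect_sub => a b /existsP [e /andP [eF je]].
apply: connect1; apply/existsP; exists e; rewrite je andbT.
by apply: contra eF; apply: (subsetP sub).
Qed.

Lemma adjF_closed F X : dl X \subset F -> closed (adjF F) X.
Proof.
move=> sub x y /existsP [e /andP [eF je]].
apply/eqP/negPn; rewrite -(joins_cross X je); apply: contra eF => c.
by apply: (subsetP sub); rewrite inE.
Qed.

Lemma connect_dl F X x y : dl X \subset F -> connect (adjF F) x y ->
  (x \in X) = (y \in X).
Proof. move=> sub c; exact: (closed_connect (adjF_closed sub) c). Qed.

Lemma dl_gcomp F x : dl (gcomp F x) \subset F.
Proof.
apply/subsetP => e; rewrite inE /cross !inE.
apply: contraR => eF.
have a : adjF F (endp e).1 (endp e).2.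
  by apply/existsP; exists e; rewrite eF joins_self.
by rewrite (same_connect_r (@adjF_csym F) (connect1 a)).
Qed.

Lemma dlC X : dl (~: X) = dl X.
Proof. by apply/setP => e; rewrite !inE /cross !inE; case: (_ \in X); case: (_ \in X). Qed.

Definition sdiff (T : finType) (A B : {set T}) := (A :\: B) :|: (B :\: A).

Lemma in_sdiff (T : finType) (A B : {set T}) a : (a \in sdiff A B) = (a \in A) (+) (a \in B).
Proof. by rewrite !inE; case: (a \in A); case: (a \in B). Qed.

Lemma dl_sdiff X Y : dl (sdiff X Y) = sdiff (dl X) (dl Y).
Proof.
apply/setP => e; rewrite in_sdiff !inE /cross !in_sdiff.
by case: (_ \in X); case: (_ \in X); case: (_ \in Y); case: (_ \in Y).
Qed.

Lemma card_sdiff (T : finType) (A B : {set T}) :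
  #|sdiff A B| + 2 * #|A :&: B| = #|A| + #|B|.
Proof.
have -> : sdiff A B = (A :|: B) :\: (A :&: B).
  by apply/setP => a; rewrite in_sdiff !inE; case: (a \in A); case: (a \in B).
rewrite cardsD -cardsUI.
have -> : (A :|: B) :&: (A :&: B) = A :&: B.
  by apply/setP => a; rewrite !inE; case: (a \in A); case: (a \in B).
have : #|A :&: B| <= #|A :|: B|.
  by apply: subset_leq_card; apply/subsetP => a; rewrite !inE => /andP [->].
lia.
Qed.

Lemma edge_cutP F : edge_cut F <->
  exists x y, connect (adjF set0) x y /\ ~~ connect (adjF F) x y.
Proof.
set R0 := adjF set0; set R := adjF F.
have mono : forall x y, connect R x y -> connect R0 x y.
  by move=> x y; apply: connect_mono; apply: sub0set.
have nc : forall r : rel (vert g), n_comp r predT = #|[set z | roots r z]|.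
  by move=> r; apply: eq_card => z; rewrite !inE andbT.
have surj : [set z | roots R0 z] = root R0 @: [set z | roots R z].
  apply/setP => z; rewrite inE; apply/idP/imsetP => [rz|[r _ ->]]; last first.
    exact: (roots_root (adjF_csym _)).
  exists (root R z); first by rewrite inE (roots_root (adjF_csym _)).
  apply/esym; transitivity (root R0 z); last exact/eqP.
  apply/(rootP (adjF_csym _)).
  by rewrite adjF_csym; apply: mono; apply: connect_root.
rewrite /edge_cut /ncomp !nc surj; split.
  move=> lt.
  case: (boolP [exists x, exists y, connect R0 x y && ~~ connect R x y]).
    by move=> /existsP [x /existsP [y /andP [a b]]]; exists x, y.
  rewrite negb_exists => /forallP H; exfalso; move: lt; apply/negP.
  have eqc : connect R0 =2 connect R.
    move=> x y; apply/idP/idP; last exact: mono.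
    by move=> c; have := H x; rewrite negb_exists => /forallP /(_ y); rewrite c /= negbK.
  rewrite -leqNgt -surj -!nc (eq_n_comp eqc).
  done.
move=> [x [y [c0 nc']]].
rewrite ltn_neqAle leq_imset_card andbT.
apply/negP => /imset_injP inj.
have : root R x = root R y.
  apply: inj; rewrite ?inE ?(roots_root (adjF_csym _)) //.
  have e1 : root R0 (root R x) = root R0 x.
    by apply/esym/(rootP (adjF_csym _)); apply: mono; apply: connect_root.
  have e2 : root R0 (root R y) = root R0 y.
    by apply/esym/(rootP (adjF_csym _)); apply: mono; apply: connect_root.
  by rewrite e1 e2; apply/(rootP (adjF_csym _)).
by move/(rootP (adjF_csym _)); apply/negP.
Qed.


Definition connected := forall x y, connect (adjF (@set0 (edge g))) x y.

Lemma dl_neq0 X x y : connected -> x \in X -> y \notin X -> dl X != set0.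
Proof.
move=> cn xX yX; apply/negP => /eqP d0.
have h : dl X \subset set0 by rewrite d0.
by have := connect_dl h (cn x y); rewrite xX (negbTE yX).
Qed.

Lemma cutP F : connected ->
  (edge_cut F <-> exists X, dl X \subset F /\ dl X != set0).
Proof.
move=> cn; split.
  move/edge_cutP => [x [y [c0 nc]]]; exists (gcomp F x); split.
    exact: dl_gcomp.
  by apply: (dl_neq0 (x:=x) (y:=y) cn); rewrite !inE.
move=> [X [sub /set0Pn [e]]]; rewrite inE /cross => ce.
apply/edge_cutP; exists (endp e).1, (endp e).2; split; first exact: cn.
by apply/negP => c; move: ce; rewrite (connect_dl sub c) eqxx.
Qed.

Lemma bridgeless_dl : connected -> bridgeless g -> forall X, #|dl X| != 1.
Proof.
move=> cn br X; apply/negP => /cards1P [e de]; apply: (br e).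
change (edge_cut [set e]); apply/cutP => //; exists X; rewrite de subxx; split => //.
by apply/set0Pn; exists e; rewrite inE.
Qed.

Lemma kcut3P C : connected -> (forall X, #|dl X| != 1) ->
  (k_edge_cut 3 C <-> exists X, dl X = C /\ #|C| = 3).
Proof.
move=> cn br; split.
  move=> [ec min c3]; move/(cutP _ cn): ec => [X [sub ne]]; exists X; split => //.
  case: (boolP (dl X == C)) => [/eqP //| neq]; exfalso.
  apply: (min (dl X)); first by rewrite properEneq neq sub.
  by apply/cutP => //; exists X.
move=> [X [dX c3]]; split => //.
  apply/cutP => //; exists X; rewrite dX subxx; split => //.
  by rewrite -card_gt0 c3.
move=> F' pr /(cutP _ cn) [Z [sub ne]].
have c1 : #|dl Z| < 3 by rewrite -c3; apply: leq_ltn_trans (subset_leq_card sub) (proper_card pr).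
have c0 : 0 < #|dl Z| by rewrite card_gt0.
have c2 : #|dl Z| = 2 by move: (br Z) c1 c0; case: #|dl Z| => [|[|[|]]].
have sZ : dl Z \subset C by apply: subset_trans sub (proper_sub pr).
have := card_sdiff (dl X) (dl Z); rewrite -dl_sdiff dX.
have -> : C :&: dl Z = dl Z by apply/setIidPr.
rewrite c2 c3 => h; have : #|dl (sdiff X Z)| == 1 by apply/eqP; lia.
by rewrite (negbTE (br _)).
Qed.

Lemma sum_eq_in (T : finType) (X : {set T}) a : \sum_(v in X) (a == v) = (a \in X).
Proof.
case: (boolP (a \in X)) => aX.
  rewrite (bigD1 a) //= eqxx big1 // => v /andP [_ nv]; by rewrite eq_sym (negbTE nv).
by rewrite big1 // => v vX; apply/eqP; rewrite eqb0; apply: contra aX => /eqP ->.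
Qed.

Lemma dcount (Hl : loopless g) (A : {set edge g}) X :
  \sum_(v in X) #|[set e in A | incident e v]| =
  \sum_(e in A) (((endp e).1 \in X) + ((endp e).2 \in X)).
Proof.
have h v : #|[set e in A | incident e v]| = \sum_(e in A) incident e v.
  rewrite -sum1_card big_mkcond [RHS]big_mkcond; apply: eq_bigr => e _.
  by rewrite inE; case: (e \in A); case: (incident e v).
under eq_bigr => v _ do rewrite h.
rewrite exchange_big; apply: eq_bigr => e _.
have h2 v : (incident e v : nat) = ((endp e).1 == v) + ((endp e).2 == v).
  rewrite /incident; case: (boolP ((endp e).1 == v)) => [/eqP a|]; last by [].
  by rewrite -a eq_sym (negbTE (Hl e)).
under eq_bigr => v _ do rewrite h2.
by rewrite big_split /= !sum_eq_in.
Qed.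

Lemma sum_cross (A : {set edge g}) X :
  odd (\sum_(e in A) (((endp e).1 \in X) + ((endp e).2 \in X))) = odd #|A :&: dl X|.
Proof.
have h e : (((endp e).1 \in X) + ((endp e).2 \in X)) =
   (cross X e : nat) + 2 * (((endp e).1 \in X) && ((endp e).2 \in X)).
  by rewrite /cross; case: (_ \in X); case: (_ \in X).
under eq_bigr => e _ do rewrite h.
rewrite big_split /= -big_distrr /= oddD oddM /= addbF.
congr odd; rewrite -sum1_card big_mkcond [RHS]big_mkcond; apply: eq_bigr => e _.
by rewrite !inE; case: (e \in A).
Qed.

Lemma parity (Hl : loopless g) (Hc : cubic g) M : perfect_matching M ->
  forall X, odd #|M :&: dl X| = odd #|dl X|.
Proof.
move=> pm X.
rewrite -sum_cross -dcount //.
under eq_bigr => v _ do rewrite pm.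
have -> : #|dl X| = #|setT :&: dl X| by rewrite setTI.
rewrite -sum_cross -dcount //.
have h v : #|[set e in [set: edge g] | incident e v]| = 3.
  by rewrite -(Hc v) /deg; apply: eq_card => e; rewrite !inE.
under [in RHS]eq_bigr => v _ do rewrite h.
by rewrite !sum_nat_const !oddM /= ?andbT.
Qed.

End Generic.


Lemma connect_map_inv (T U : finType) (e : rel T) (e' : rel U) (P : pred T) (f : T -> U) :
  (forall x y, P x -> e x y -> P y /\ connect e' (f x) (f y)) ->
  forall x y, P x -> connect e x y -> connect e' (f x) (f y).
Proof.
move=> H x y Px /connectP [p pth ->]; elim: p x Px pth => [|z p IH] x Px /=.
  by move=> _; apply: connect0.
move/andP => [exz pth]; have [Pz c] := H _ _ Px exz.
exact: connect_trans c (IH z Pz pth).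
Qed.

Lemma img_eq (T U : finType) (A : {set T}) (B : {set U}) (s : U -> T) :
  (forall h, (s h \in A) = (h \in B)) -> (forall e, e \in A -> exists h, e = s h) ->
  A = s @: B.
Proof.
move=> H1 H2; apply/setP => e; apply/idP/imsetP.
  by move=> eA; have [h eh] := H2 e eA; exists h => //; rewrite -H1 -eh.
by move=> [h hB ->]; rewrite H1.
Qed.

Lemma joins_redge (g : mgraph) (S : {set vert g}) e x y :
  joins e x y -> redge_in S e = (x \in S) && (y \in S).
Proof.
rewrite /joins /redge_in; case: (endp e) => a b /orP [] /eqP [-> ->] //.
by rewrite andbC.
Qed.

Section Side.
Variables (g : mgraph) (e1 e2 : edge g) (a1 b1 a2 b2 : vert g).
Local Notation D := [set e1; e2].
Local Notation S1 := (gcomp D a1).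
Local Notation S2 := (gcomp D b1).
Hypotheses (Hl : loopless g) (Hc : cubic g) (Hbr : forall X : {set vert g}, #|dl X| != 1)
  (Hcn : connected g) (Hj1 : joins e1 a1 b1) (Hj2 : joins e2 a2 b2)
  (ha2 : a2 \in S1) (hb2 : b2 \in S2)
  (Hpart : forall x, (x \in S1) != (x \in S2)) (He12 : e1 != e2).

Lemma a1S1 : a1 \in S1. Proof. exact: gcomp_self. Qed.
Lemma b1S2 : b1 \in S2. Proof. exact: gcomp_self. Qed.
Lemma S2notS1 x : x \in S2 -> x \notin S1.
Proof. by move=> h; have := Hpart x; rewrite h; case: (x \in S1). Qed.
Lemma S1notS2 x : x \in S1 -> x \notin S2.
Proof. by move=> h; have := Hpart x; rewrite h; case: (x \in S2). Qed.
Lemma S1orS2 x : (x \in S1) || (x \in S2).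
Proof. by have := Hpart x; case: (x \in S1); case: (x \in S2). Qed.

Lemma comp_step (a x y : vert g) : x \in gcomp D a -> adjF D x y -> y \in gcomp D a.
Proof. by rewrite !inE => c s; apply: connect_trans c (connect1 s). Qed.

Lemma classify e : [\/ e = e1, e = e2, redge_in S1 e | redge_in S2 e].
Proof.
case: (boolP (e \in D)) => [|eD].
  by rewrite !inE => /orP [] /eqP ->; [apply: Or41 | apply: Or42].
have s : adjF D (endp e).1 (endp e).2 by apply/existsP; exists e; rewrite eD joins_self.
rewrite /redge_in; case/orP: (S1orS2 (endp e).1) => h.
  by apply: Or43; rewrite h (comp_step h s).
by apply: Or44; rewrite h (comp_step h s).
Qed.

Lemma e1_notS1 : ~~ redge_in S1 e1.
Proof. by rewrite (joins_redge _ Hj1) (negbTE (S2notS1 b1S2)) andbF. Qed.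
Lemma e2_notS1 : ~~ redge_in S1 e2.
Proof. by rewrite (joins_redge _ Hj2) (negbTE (S2notS1 hb2)) andbF. Qed.
Lemma e1_notS2 : ~~ redge_in S2 e1.
Proof. by rewrite (joins_redge _ Hj1) (negbTE (S1notS2 a1S1)). Qed.
Lemma e2_notS2 : ~~ redge_in S2 e2.
Proof. by rewrite (joins_redge _ Hj2) (negbTE (S1notS2 ha2)). Qed.

Lemma a12 : a1 != a2.
Proof.
apply/negP => /eqP E.
set Z := a1 |: S2.
have dZ : dl Z = [set e | incident e a1] :\: D.
  apply/setP => e; rewrite !inE.
  case: (classify e) => [->|->|h|h].
  - by rewrite eqxx /= (joins_cross _ Hj1) /Z !in_setU1 eqxx b1S2 orbT.
  - by rewrite eqxx orbT /= (joins_cross _ Hj2) /Z !in_setU1 E eqxx hb2 orbT.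
  - have n1 : e != e1 by apply/eqP => h1; move: h; rewrite h1 (negbTE e1_notS1).
    have n2 : e != e2 by apply/eqP => h1; move: h; rewrite h1 (negbTE e2_notS1).
    move: h; rewrite /redge_in => /andP [p q].
    rewrite (negbTE n1) (negbTE n2) /= /cross /incident /Z !in_setU1.
    rewrite (negbTE (S1notS2 p)) (negbTE (S1notS2 q)) !orbF.
    have := Hl e; move: p q; case: (endp e) => x y /= _ _ nxy.
    have [ex|nx] := eqVneq x a1; have [ey|ny] := eqVneq y a1 => //.
    by move: nxy; rewrite ex ey eqxx.
  - move: h; rewrite /redge_in => /andP [p q].
    rewrite /cross /Z !in_setU1 p q !orbT /=.
    have n1 : (endp e).1 != a1 by apply: contraTneq p => ->; exact: S1notS2 a1S1.
    have n2 : (endp e).2 != a1 by apply: contraTneq q => ->; exact: S1notS2 a1S1.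
    by rewrite /incident (negbTE n1) (negbTE n2) andbF.
have sub : D \subset [set e | incident e a1].
  apply/subsetP => e; rewrite !inE => /orP [] /eqP ->.
    by rewrite (joins_inc _ Hj1) eqxx.
  by rewrite (joins_inc _ Hj2) E eqxx.
have := Hbr Z; rewrite dZ cardsD (setIidPr sub) cards2 He12; have := Hc a1; rewrite /deg => ->.
by [].
Qed.

Variable (M : {set edge g}) (M1 : {set edge (reduce (gcomp_self D a1) ha2)}).
Hypotheses (HM1 : well_spread M1)
  (HMold : forall x : {e : edge g | redge_in S1 e}, (val x \in M) = (Some x \in M1))
  (HMe1 : (e1 \in M) = (None \in M1)) (HMe2 : (e2 \in M) = (None \in M1)).

Local Notation G1 := (reduce (gcomp_self D a1) ha2).

Definition pi1 (x : vert g) : vert G1 := insubd (exist _ a1 (gcomp_self D a1)) x.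

Lemma pi1K x : x \in S1 -> val (pi1 x) = x.
Proof. by move=> h; rewrite /pi1 insubdK. Qed.

Lemma joins_some (x : {e | redge_in S1 e}) p q : p \in S1 -> q \in S1 ->
  joins (Some x : edge G1) (pi1 p) (pi1 q) = joins (val x) p q.
Proof.
move=> pS qS; rewrite /joins /= !xpair_eqE -!val_eqE /= !pi1K //; case: (endp (val x)) => a b /=; rewrite ?xpair_eqE.
Qed.

Lemma cn1 : connected G1.
Proof.
have step : forall x y, x \in S1 -> adjF D x y -> y \in S1 /\
    connect (adjF (@set0 (edge G1))) (pi1 x) (pi1 y).
  move=> x y xS s; have yS := comp_step xS s; split => //.
  move: s => /existsP [e /andP [eD je]].
  have r : redge_in S1 e by rewrite (joins_redge _ je) xS yS.
  apply: connect1; apply/existsP; exists (Some (exist _ e r)); rewrite inE /=.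
  by rewrite joins_some.
have base : forall y : vert G1, connect (adjF set0) (pi1 a1) y.
  move=> [y yS]; have c : connect (adjF D) a1 y by move: (yS); rewrite inE.
  have := connect_map_inv step a1S1 c.
  by have -> : pi1 y = exist _ y yS by apply: val_inj; rewrite /= pi1K.
move=> x y; apply: connect_trans (base y); rewrite adjF_csym; exact: base.
Qed.

Definition sig1 (c : edge g) (h : edge G1) : edge g :=
  match h with Some x => val x | None => c end.

Lemma sig1_inj c : ~~ redge_in S1 c -> injective (sig1 c).
Proof.
move=> nc [x|] [y|] //=.
- by move=> h; congr Some; apply: val_inj.
- by move=> h; move: nc; rewrite -h (valP x).
- by move=> h; move: nc; rewrite h (valP y).
Qed.

Lemma sig1_M c h : (c == e1) || (c == e2) -> (sig1 c h \in M) = (h \in M1).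
Proof.
move=> hc; case: h => [x|] /=; first exact: HMold.
by case/orP: hc => /eqP ->.
Qed.

Lemma cD_notS1 c : (c == e1) || (c == e2) -> ~~ redge_in S1 c.
Proof. by case/orP => /eqP ->; [exact: e1_notS1 | exact: e2_notS1]. Qed.

Definition restr (X : {set vert g}) : {set vert G1} := [set y | val y \in X].
Lemma in_restr X y : (y \in restr X) = (val y \in X).
Proof. by rewrite inE. Qed.

Lemma transfer (X : {set vert g}) w : (w == a1) || (w == a2) ->
  (forall x, x \in S2 -> (x \in X) = (w \in X)) ->
  dl X = sig1 (if w == a1 then e2 else e1) @: dl (restr X).
Proof.
move=> hw hX; apply: img_eq.
  case => [x|] /=; first by rewrite in_dl (@in_dl G1) /cross /= !in_restr.
  rewrite in_dl (@in_dl G1) [cross (restr X) _]/cross /= !in_restr /=.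
  case: (boolP (w == a1)) => [/eqP ew|nw] /=.
    rewrite (joins_cross _ Hj2) (hX _ hb2) ew.
    by case: (a1 \in X); case: (a2 \in X).
  have ew : w = a2 by move: hw; rewrite (negbTE nw) => /eqP.
  by rewrite (joins_cross _ Hj1) (hX _ b1S2) ew.
move=> e; rewrite inE; case: (classify e) => [->|->|h|h].
- case: (boolP (w == a1)) => [/eqP ew|nw].
    by rewrite (joins_cross _ Hj1) (hX _ b1S2) ew eqxx.
  by move=> _; exists None.
- case: (boolP (w == a1)) => [/eqP ew|nw].
    by move=> _; exists None.
  have ew : w = a2 by move: hw; rewrite (negbTE nw) => /eqP.
  by rewrite (joins_cross _ Hj2) (hX _ hb2) ew eqxx.
- by move=> _; exists (Some (exist _ e h)).
- move: h; rewrite /redge_in /cross => /andP [p q].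
  by rewrite (hX _ p) (hX _ q) eqxx.
Qed.

Lemma br1 : forall Z : {set vert G1}, #|dl Z| != 1.
Proof.
move=> Z.
set X := [set x | if x \in S1 then pi1 x \in Z else pi1 a1 \in Z].
have inX : forall x, (x \in X) = (if x \in S1 then pi1 x \in Z else pi1 a1 \in Z).
  by move=> x; rewrite /X in_set.
have hX : forall x, x \in S2 -> (x \in X) = (a1 \in X).
  by move=> x xS; rewrite !inX (negbTE (S2notS1 xS)) a1S1.
have rX : restr X = Z.
  apply/setP => y; rewrite in_restr inX (valP y).
  by have -> : pi1 (val y) = y by apply: val_inj; rewrite pi1K // (valP y).
have := transfer (w := a1) _ hX; rewrite eqxx rX => /(_ isT) dX.
by have := Hbr X; rewrite dX card_imset //; apply: sig1_inj; exact: e2_notS1.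
Qed.

Lemma side_cut (X : {set vert g}) w : (w == a1) || (w == a2) ->
  (forall x, x \in S2 -> (x \in X) = (w \in X)) ->
  #|dl X| = 3 -> #|M :&: dl X| = 1.
Proof.
move=> hw hX c3.
set c := if w == a1 then e2 else e1.
have cD : (c == e1) || (c == e2) by rewrite /c; case: (w == a1); rewrite eqxx ?orbT.
have inj := sig1_inj (cD_notS1 cD).
have dX := transfer hw hX; rewrite -/c in dX.
have c3' : #|dl (restr X)| = 3 by rewrite -c3 dX card_imset.
have k : k_edge_cut 3 (dl (restr X)).
  by apply/(kcut3P _ cn1 br1); exists (restr X).
have := HM1.2 _ k => h1.
have -> : M :&: dl X = sig1 c @: (M1 :&: dl (restr X)).
  apply: img_eq.
    by move=> h; rewrite !in_setI sig1_M // dX (mem_imset _ _ inj).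
  move=> e; rewrite in_setI => /andP [_]; rewrite dX => /imsetP [h _ ->].
  by exists h.
by rewrite card_imset.
Qed.

Lemma side_pm x : x \in S1 -> #|[set e in M | incident e x]| = 1.
Proof.
move=> xS.
set c := if x == a1 then e1 else e2.
have cD : (c == e1) || (c == e2) by rewrite /c; case: (x == a1); rewrite eqxx ?orbT.
have inj := sig1_inj (cD_notS1 cD).
have b2x : (b2 == x) = false by apply/negP => /eqP h; move: (S2notS1 hb2); rewrite h xS.
have b1x : (b1 == x) = false by apply/negP => /eqP h; move: (S2notS1 b1S2); rewrite h xS.
have -> : [set e in M | incident e x] = sig1 c @: [set h in M1 | incident h (pi1 x)].
  apply: img_eq.
    move=> h; rewrite !inE sig1_M //; congr andb.
    case: h => [y|] /=.
      by rewrite /incident /= -!val_eqE /= pi1K.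
    rewrite {2}/incident /= -!val_eqE /= pi1K // /c.
    case: (boolP (x == a1)) => [/eqP ->|nx] /=.
      by rewrite (joins_inc _ Hj1) !eqxx.
    have ax : (a1 == x) = false by rewrite eq_sym (negbTE nx).
    by rewrite (joins_inc _ Hj2) b2x orbF ax.
  move=> e; rewrite inE => /andP [_]; case: (classify e) => [->|->|h|h].
  - rewrite (joins_inc _ Hj1) b1x orbF => /eqP ax; exists None.
    by rewrite /= /c ax eqxx.
  - rewrite (joins_inc _ Hj2) b2x orbF => /eqP ax; exists None.
    by rewrite /= /c -ax eq_sym (negbTE a12).
  - by move=> _; exists (Some (exist _ e h)).
  - move: h; rewrite /redge_in /incident => /andP [p q] /orP [] /eqP ex.
      by move: (S2notS1 p); rewrite ex xS.
    by move: (S2notS1 q); rewrite ex xS.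
by rewrite card_imset // HM1.1.
Qed.

Lemma side_all : a1 != a2 /\ (forall x, x \in S1 -> #|[set e in M | incident e x]| = 1) /\
  (forall (X : {set vert g}) w, (w == a1) || (w == a2) ->
     (forall x, x \in S2 -> (x \in X) = (w \in X)) -> #|dl X| = 3 -> #|M :&: dl X| = 1).
Proof. split; first exact: a12. split; [exact: side_pm | exact: side_cut]. Qed.

End Side.


Lemma lift_old_in (g : mgraph) (S : {set vert g}) a b (Ha : a \in S) (Hb : b \in S)
  (N : {set edge (reduce Ha Hb)}) (x : {e | redge_in S e}) :
  (val x \in lift_old N) = (Some x \in N).
Proof.
rewrite inE; apply/existsP/idP => [[y /andP [/eqP E h]]|h].
  by have <- : y = x by apply: val_inj.
by exists x; rewrite eqxx.
Qed.

Lemma lift_old_out (g : mgraph) (S : {set vert g}) a b (Ha : a \in S) (Hb : b \in S)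
  (N : {set edge (reduce Ha Hb)}) e : ~~ redge_in S e -> (e \in lift_old N) = false.
Proof.
move=> ne; rewrite inE; apply/existsP => [[y /andP [/eqP E _]]].
by move: ne; rewrite -E (valP y).
Qed.

Lemma card3_set (T : finType) (a b c : T) : a != b -> a != c -> b != c ->
  #|a |: (b |: [set c])| = 3.
Proof.
move=> ab ac bc; rewrite !cardsU1 cards1 !inE negb_or ab ac bc.
done.
Qed.

Unset Implicit Arguments.

Theorem theorem2 (g : mgraph) (e1 e2 : edge g) (u1 v1 u2 v2 : vert g)
  (Hloop : loopless g) (Hcubic : cubic g) (Hbr : bridgeless g)
  (Hcut : k_edge_cut 2 [set e1; e2])
  (He1 : joins e1 u1 v1) (He2 : joins e2 u2 v2)
  (Htwo : ncomp [set e1; e2] = 2)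
  (hu2 : u2 \in gcomp [set e1; e2] u1)
  (hv2 : v2 \in gcomp [set e1; e2] v1)
  (Hsep : v1 \notin gcomp [set e1; e2] u1)
  (M1 : {set edge (reduce (gcomp_self [set e1; e2] u1) hu2)})
  (M2 : {set edge (reduce (gcomp_self [set e1; e2] v1) hv2)})
  (HM1 : well_spread M1) (HM2 : well_spread M2)
  (Hagree : (None \in M1) = (None \in M2)) :
  well_spread ((if None \in M1 then [set e1; e2] else set0)
               :|: lift_old M1 :|: lift_old M2).
Proof.
have e12 : e1 != e2.
  have := Hcut; case => _ _; rewrite cards2 => h; apply/negP => /eqP E.
  by move: h; rewrite E eqxx.
have Hpart : forall x, (x \in gcomp [set e1; e2] u1) != (x \in gcomp [set e1; e2] v1).
  move=> x; case: (boolP (x \in gcomp [set e1; e2] u1)) => x1;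
    case: (boolP (x \in gcomp [set e1; e2] v1)) => x2 //=.
    move: Hsep; rewrite !inE in x1 x2 *; move=> /negP H; exfalso; apply: H; apply: connect_trans x1 _.
    by rewrite adjF_csym.
  set R := adjF [set e1; e2].
  have cs := adjF_csym [set e1; e2].
  have d12 : root R u1 != root R v1 by rewrite (root_connect cs); move: Hsep; rewrite inE.
  have d13 : root R u1 != root R x by rewrite (root_connect cs); move: x1; rewrite inE.
  have d23 : root R v1 != root R x by rewrite (root_connect cs); move: x2; rewrite inE.
  have : 3 <= ncomp [set e1; e2].
    rewrite -(card3_set d12 d13 d23) /ncomp /n_comp_mem; apply: subset_leq_card.
    apply/subsetP => z; rewrite !inE => /or3P [] /eqP ->; by rewrite /= (roots_root cs).
  by rewrite Htwo.
have Hpart' : forall x, (x \in gcomp [set e1; e2] v1) != (x \in gcomp [set e1; e2] u1).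
  by move=> x; rewrite eq_sym; apply: Hpart.
have cnG : connected g.
  have toU : forall x, connect (adjF set0) u1 x.
    move=> x; case/orP: (S1orS2 Hpart x) => h; rewrite inE in h.
      exact: connect_mono (sub0set _) h.
    apply: connect_trans (connect_mono (sub0set _) h).
    by apply: connect1; apply/existsP; exists e1; rewrite inE He1.
  by move=> x y; apply: connect_trans (toU y); rewrite adjF_csym; exact: toU.
have brG := bridgeless_dl cnG Hbr.
set M := (if None \in M1 then [set e1; e2] else set0) :|: lift_old M1 :|: lift_old M2.
have notS12 : forall e, redge_in (gcomp [set e1; e2] u1) e ->
    ~~ redge_in (gcomp [set e1; e2] v1) e.
  move=> e; rewrite /redge_in => /andP [p _].
  by rewrite (negbTE (S1notS2 Hpart p)).
have notS21 : forall e, redge_in (gcomp [set e1; e2] v1) e ->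
    ~~ redge_in (gcomp [set e1; e2] u1) e.
  move=> e; rewrite /redge_in => /andP [p _].
  by rewrite (negbTE (S2notS1 Hpart p)).
have notD1 : forall e, redge_in (gcomp [set e1; e2] u1) e -> e \notin [set e1; e2].
  move=> e h; rewrite !inE; apply/norP; split; apply/eqP => E; move: h; rewrite E.
    by rewrite (negbTE (e1_notS1 He1 Hpart)).
  by rewrite (negbTE (e2_notS1 He2 hv2 Hpart)).
have notD2 : forall e, redge_in (gcomp [set e1; e2] v1) e -> e \notin [set e1; e2].
  move=> e h; rewrite !inE; apply/norP; split; apply/eqP => E; move: h; rewrite E.
    by rewrite (negbTE (e1_notS2 He1 Hpart)).
  by rewrite (negbTE (e2_notS2 He2 hu2 Hpart)).
have HMold1 : forall x : {e | redge_in (gcomp [set e1; e2] u1) e},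
    (val x \in M) = (Some x \in M1).
  move=> x; rewrite /M !in_setU lift_old_in (lift_old_out _ (notS12 _ (valP x))) orbF.
  have nd := notD1 _ (valP x).
  by case: (None \in M1); rewrite ?(negbTE nd) ?inE.
have HMold2 : forall x : {e | redge_in (gcomp [set e1; e2] v1) e},
    (val x \in M) = (Some x \in M2).
  move=> x; rewrite /M !in_setU lift_old_in (lift_old_out _ (notS21 _ (valP x))).
  have nd := notD2 _ (valP x).
  by case: (None \in M1); rewrite ?(negbTE nd) ?inE.
have HMe1 : (e1 \in M) = (None \in M1).
  rewrite /M !in_setU (lift_old_out _ (e1_notS1 He1 Hpart)).
  rewrite (lift_old_out _ (e1_notS2 He1 Hpart)) !orbF.
  by case: (None \in M1); rewrite !inE ?eqxx.
have HMe2 : (e2 \in M) = (None \in M1).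
  rewrite /M !in_setU (lift_old_out _ (e2_notS1 He2 hv2 Hpart)).
  rewrite (lift_old_out _ (e2_notS2 He2 hu2 Hpart)) !orbF.
  by case: (None \in M1); rewrite !inE ?eqxx ?orbT.
have He1' : joins e1 v1 u1 by rewrite joinsC.
have He2' : joins e2 v2 u2 by rewrite joinsC.
have [a12 [pm1 cut1]] := side_all Hloop Hcubic brG He1 He2 hv2 Hpart e12 HM1 HMold1 HMe1 HMe2.
have [b12 [pm2 cut2]] := side_all Hloop Hcubic brG He1' He2' hu2 Hpart' e12 HM2 HMold2
  (etrans HMe1 Hagree) (etrans HMe2 Hagree).
have pmM : perfect_matching M.
  by move=> x; case/orP: (S1orS2 Hpart x) => h; [exact: pm1 | exact: pm2].
split => //.
have dS1 : dl (gcomp [set e1; e2] u1) = [set e1; e2].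
  apply/setP => e; rewrite in_dl in_set2.
  case: (classify Hpart e) => [->|->|h|h].
  - by rewrite (joins_cross _ He1) gcomp_self (negbTE Hsep) eqxx.
  - by rewrite (joins_cross _ He2) hu2 (negbTE (S2notS1 Hpart hv2)) eqxx orbT.
  - have := notD1 _ h; rewrite in_set2 => /negbTE ->.
    by move: h; rewrite /redge_in /cross => /andP [-> ->].
  - have := notD2 _ h; rewrite in_set2 => /negbTE ->.
    move: h; rewrite /redge_in /cross => /andP [p q].
    by rewrite (negbTE (S2notS1 Hpart p)) (negbTE (S2notS1 Hpart q)).
have noD : forall Z, #|dl Z| = 3 -> e1 \in dl Z -> e2 \in dl Z -> False.
  move=> Z c3 i1 i2.
  have sub : [set e1; e2] \subset dl Z.
    by apply/subsetP => e; rewrite in_set2 => /orP [] /eqP ->.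
  have := card_sdiff (dl Z) (dl (gcomp [set e1; e2] u1)).
  rewrite -dl_sdiff dS1 (setIidPr sub) c3 cards2 e12 => h.
  have : #|dl (sdiff Z (gcomp [set e1; e2] u1))| == 1 by apply/eqP; clear -h; lia.
  by rewrite (negbTE (brG _)).
have par := parity Hloop Hcubic pmM.
have main : forall X, #|dl X| = 3 -> u1 \notin X -> #|M :&: dl X| = 1.
  move=> X c3 uX.
  case: (boolP [forall x, (x \in gcomp [set e1; e2] u1) ==> (x \notin X)]).
    move/forallP => A0.
    case: (boolP (v1 \in X)) => v1X.
      case: (boolP (v2 \in X)) => v2X.
        exfalso; apply: (noD X c3).
          by rewrite in_dl (joins_cross _ He1) (negbTE uX) v1X.
        by rewrite in_dl (joins_cross _ He2) v2X (negbTE (implyP (A0 u2) hu2)).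
      apply: (cut2 X v2) => //; first by rewrite eqxx orbT.
      by move=> x xS; rewrite (negbTE v2X); exact: negbTE (implyP (A0 x) xS).
    apply: (cut2 X v1) => //; first by rewrite eqxx.
    by move=> x xS; rewrite (negbTE v1X); exact: negbTE (implyP (A0 x) xS).
  rewrite negb_forall => /existsP [x1]; rewrite negb_imply negbK => /andP [x1S x1X].
  case: (boolP [forall x, (x \in gcomp [set e1; e2] v1) ==> (x \notin X)]).
    move/forallP => B0.
    apply: (cut1 X u1) => //; first by rewrite eqxx.
    by move=> x xS; rewrite (negbTE uX); exact: negbTE (implyP (B0 x) xS).
  rewrite negb_forall => /existsP [x2]; rewrite negb_imply negbK => /andP [x2S x2X].
  set A := X :&: gcomp [set e1; e2] u1.
  set B := X :&: gcomp [set e1; e2] v1.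
  have uA : u1 \notin A by rewrite in_setI (negbTE uX).
  have uB : u1 \notin B by rewrite in_setI (negbTE uX).
  have dA : 2 <= #|dl A|.
    have x1A : x1 \in A by rewrite /A in_setI x1X x1S.
    have := dl_neq0 cnG x1A uA.
    by rewrite -card_gt0; have := brG A; case: #|dl A| => [|[|n]].
  have dB : 2 <= #|dl B|.
    have x2B : x2 \in B by rewrite /B in_setI x2X x2S.
    have := dl_neq0 cnG x2B uB.
    by rewrite -card_gt0; have := brG B; case: #|dl B| => [|[|n]].
  have XAB : X = sdiff A B.
    apply/setP => x; rewrite in_sdiff !in_setI.
    have := Hpart x; case: (x \in X); case: (x \in gcomp _ u1); by case: (x \in gcomp _ v1).
  have dX : dl X = sdiff (dl A) (dl B) by rewrite {1}XAB dl_sdiff.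
  have IAB : dl A :&: dl B \subset [set e2].
    apply/subsetP => e; rewrite in_setI !in_dl in_set1 => /andP [cA cB].
    case: (classify Hpart e) => [E|E|h|h].
    - move: cA; rewrite E (joins_cross _ He1) !in_setI (negbTE uX).
      by rewrite (negbTE Hsep) andbF.
    - by rewrite E eqxx.
    - move: cB h; rewrite /redge_in /cross => cB /andP [p q]; move: cB.
      by rewrite !in_setI (negbTE (S1notS2 Hpart p)) (negbTE (S1notS2 Hpart q)) !andbF.
    - move: cA h; rewrite /redge_in /cross => cA /andP [p q]; move: cA.
      by rewrite !in_setI (negbTE (S2notS1 Hpart p)) (negbTE (S2notS1 Hpart q)) !andbF.
  have cI : #|dl A :&: dl B| <= 1 by rewrite -(cards1 e2); apply: subset_leq_card.
  have cs := card_sdiff (dl A) (dl B); rewrite -dX c3 in cs.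
  have cI1 : #|dl A :&: dl B| = 1 by clear -cI cs dA dB; lia.
  have e2I : e2 \in dl A :&: dl B.
    have /set0Pn [e eI] : dl A :&: dl B != set0 by rewrite -card_gt0 cI1.
    by have := subsetP IAB e eI; rewrite in_set1 => /eqP E; rewrite -E.
  move: (e2I); rewrite in_setI => /andP [e2A e2B].
  have notall : ~~ (dl X \subset M).
    apply/negP => sub.
    have k : forall P : {set edge g}, e2 \in P -> P :\ e2 \subset dl X -> #|P| = 3 ->
        #|M :&: P| = 1 -> False.
      move=> P eP sP c3P m1.
      have : #|P :\ e2| <= #|M :&: P|.
        apply: subset_leq_card; apply/subsetP => e ei.
        rewrite in_setI (subsetP sub) ?(subsetP sP) //.
        by move: ei; rewrite in_setD1 => /andP [_ ->].
      have := cardsD1 e2 P; rewrite eP c3P m1 => h1 h2; clear -h1 h2; simpl in h1; lia.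
    have sA : dl A :\ e2 \subset dl X.
      apply/subsetP => e; rewrite in_setD1 => /andP [ne eA].
      rewrite dX in_sdiff eA /=; apply/negP => eB.
      have := subsetP IAB e; rewrite in_setI eA eB in_set1 => /(_ isT).
      by rewrite (negbTE ne).
    have sB : dl B :\ e2 \subset dl X.
      apply/subsetP => e; rewrite in_setD1 => /andP [ne eB].
      rewrite dX in_sdiff eB /= addbT; apply/negP => eA.
      have := subsetP IAB e; rewrite in_setI eA eB in_set1 => /(_ isT).
      by rewrite (negbTE ne).
    have : #|dl A| = 3 \/ #|dl B| = 3 by clear -cI1 cs dA dB; lia.
    case => c3'.
      apply: (k _ e2A sA c3'); apply: (cut1 A u1) => //; first by rewrite eqxx.
      move=> x xS; rewrite (negbTE uA) in_setI.
      by rewrite (negbTE (S2notS1 Hpart xS)) andbF.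
    case: (boolP (v1 \in B)) => v1B.
      apply: (noD B c3') => //.
      by rewrite in_dl (joins_cross _ He1) (negbTE uB) v1B.
    apply: (k _ e2B sB c3'); apply: (cut2 B v1) => //; first by rewrite eqxx.
    move=> x xS; rewrite (negbTE v1B) in_setI.
    by rewrite (negbTE (S1notS2 Hpart xS)) andbF.
  have od := par X; rewrite c3 /= in od.
  have le3 : #|M :&: dl X| <= 3 by rewrite -c3; apply: subset_leq_card; apply: subsetIr.
  have ne3 : #|M :&: dl X| != 3.
    apply/negP => /eqP h3; apply: (negP notall).
    have : M :&: dl X == dl X by rewrite eqEcard subsetIr h3 c3.
    by move/eqP => <-; apply: subsetIl.
  by move: od le3 ne3; case: #|M :&: dl X| => [|[|[|[|n]]]].
move=> C /(kcut3P _ cnG brG) [X [dX c3]]; rewrite -dX.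
case: (boolP (u1 \in X)) => uX; last by apply: main => //; rewrite dX.
rewrite -dlC; apply: main; first by rewrite dlC dX.
by rewrite in_setC uX.
Qed.
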